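(* Let $\varphi=(1+\sqrt5)/2$. There is an absolute constant $c>0$ such that every $n$-vertex directed tree $T$ whose longest directed path has length $\ell\ge 1$ has span at most $c\cdot \ell\cdot n^{\log_2\varphi}$; that is, the span of $T$ is in $O(\ell\cdot n^{\log_2\varphi})\subseteq O(\ell\cdot n^{0.695})$.
   Context: A directed tree is a DAG (directed acyclic graph) whose underlying undirected graph is a tree. The length of a directed path is its number of edges. An upward-planar layered drawing of a DAG $G$ maps each vertex $v$ to a point in the plane whose y-coordinate $y(v)$ is an integer, and each edge $(u,v)$ (directed from tail $u$ to head $v$) to a strictly y-monotone curve going upward from $u$ to $v$ (so $y(u)<y(v)$), such that no two edges intersect except at common endpoints. The span of an edge $(u,v)$ in such a drawing $\Gamma$ is $y(v)-y(u)$; the span of $\Gamma$ is the maximum span of its edges; the span of an upward-planar DAG is the minimum span over all its upward-planar layered drawings (no embedding prescribed). *)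

(* Defs.v *)
From mathcomp Require Import all_boot.
From Stdlib Require Import Reals ZArith.
Set Implicit Arguments. Unset Strict Implicit. Unset Printing Implicit Defensive.

Definition undirected n (E : rel 'I_n) : rel 'I_n := fun x y => E x y || E y x.

Definition directed_tree n (E : rel 'I_n) : Prop :=
  0 < n /\
  (forall x y, E x y -> ~~ connect E y x) /\
  (forall x y, E x y -> ~~ E y x) /\
  (forall x y, connect (undirected E) x y) /\
  #|[set p : 'I_n * 'I_n | E p.1 p.2]| = n.-1.

(* The longest directed path of E has length (number of edges) l.
   A directed path from x is x :: s with consecutive E-edges; its length is size s. *)
Definition longest_path_length n (E : rel 'I_n) (l : nat) : Prop :=
  (exists (x : 'I_n) (s : seq 'I_n), path E x s /\ size s = l) /\
  (forall (x : 'I_n) (s : seq 'I_n), path E x s -> size s <= l).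

Definition on_curve (cx cy : R -> R) (P : R * R) : Prop :=
  exists t : R, (0 <= t <= 1)%R /\ cx t = fst P /\ cy t = snd P.

Definition upward_planar_layered_drawing n (E : rel 'I_n)
    (X : 'I_n -> R) (Y : 'I_n -> Z) (gx gy : 'I_n -> 'I_n -> R -> R) : Prop :=
  (forall u v : 'I_n, (X u, IZR (Y u)) = (X v, IZR (Y v)) -> u = v) /\
  (forall u v : 'I_n, E u v ->
     continuity (gx u v) /\ continuity (gy u v) /\
     gx u v 0%R = X u /\ gy u v 0%R = IZR (Y u) /\
     gx u v 1%R = X v /\ gy u v 1%R = IZR (Y v) /\
     (forall s t : R, (0 <= s)%R -> (s < t)%R -> (t <= 1)%R ->
        (gy u v s < gy u v t)%R)) /\
  (forall u v w : 'I_n, E u v -> w <> u -> w <> v ->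
     ~ on_curve (gx u v) (gy u v) (X w, IZR (Y w))) /\
  (forall u v u' v' : 'I_n, E u v -> E u' v' -> (u, v) <> (u', v') ->
     forall P : R * R, on_curve (gx u v) (gy u v) P -> on_curve (gx u' v') (gy u' v') P ->
     exists w : 'I_n, (w = u \/ w = v) /\ (w = u' \/ w = v') /\ P = (X w, IZR (Y w))).

Definition drawing_span_le n (E : rel 'I_n) (Y : 'I_n -> Z) (b : R) : Prop :=
  forall u v : 'I_n, E u v -> (IZR (Y v - Y u) <= b)%R.

Definition golden_ratio : R := ((1 + sqrt 5) / 2)%R.

(* Main.v *)
Require Import Defs.
From Stdlib Require Import Reals ZArith Lra Lia.

Section RealPart.
Local Open Scope R_scope.

Definition alpha : R := ln golden_ratio / ln 2.

Lemma sqrt5_bounds : 2 < sqrt 5 < 3.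
Proof.
  split.
  - rewrite <- (sqrt_square 2) by lra. apply sqrt_lt_1; lra.
  - rewrite <- (sqrt_square 3) by lra. apply sqrt_lt_1; lra.
Qed.

Lemma phi_bounds : 1 < golden_ratio < 2.
Proof. unfold golden_ratio; destruct sqrt5_bounds; split; lra. Qed.

Lemma phi_sq : golden_ratio * golden_ratio = golden_ratio + 1.
Proof.
  unfold golden_ratio.
  assert (H := sqrt_sqrt 5 ltac:(lra)).
  nra.
Qed.

Lemma ln2_pos : 0 < ln 2.
Proof. rewrite <- ln_1. apply ln_increasing; lra. Qed.

Lemma alpha_bounds : 0 < alpha < 1.
Proof.
  destruct phi_bounds. unfold alpha. pose proof ln2_pos.
  assert (0 < ln golden_ratio) by (rewrite <- ln_1; apply ln_increasing; lra).
  assert (ln golden_ratio < ln 2) by (apply ln_increasing; lra).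
  split.
  - apply Rdiv_lt_0_compat; lra.
  - apply (Rmult_lt_reg_r (ln 2)); auto. unfold Rdiv. rewrite Rmult_assoc, Rinv_l; lra.
Qed.

Lemma Rpower2_alpha : Rpower 2 alpha = golden_ratio.
Proof.
  unfold Rpower, alpha. pose proof ln2_pos. destruct phi_bounds.
  replace (ln golden_ratio / ln 2 * ln 2) with (ln golden_ratio) by (field; lra).
  apply exp_ln; lra.
Qed.

Lemma ln_le_sub1 x : 0 < x -> ln x <= x - 1.
Proof.
  intros Hx. pose proof (exp_ineq1_le (ln x)). rewrite exp_ln in H; lra.
Qed.

Lemma bernoulli u a : 0 < u -> 0 <= a <= 1 -> Rpower u a <= 1 + a * (u - 1).
Proof.
  intros Hu Ha.
  set (s := 1 + a * (u - 1)).
  assert (Hs : 0 < s) by (unfold s; nra).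
  assert (H1 := ln_le_sub1 (u / s) ltac:(apply Rdiv_lt_0_compat; lra)).
  assert (H2 := ln_le_sub1 (/ s) ltac:(apply Rinv_0_lt_compat; lra)).
  unfold Rdiv in H1. rewrite ln_mult, ln_Rinv in H1 by (try apply Rinv_0_lt_compat; lra). rewrite ln_Rinv in H2 by lra.
  assert (H4 : a * (ln u - ln s) + (1 - a) * (- ln s) <= a * (u / s - 1) + (1 - a) * (/ s - 1)) by (unfold Rdiv; nra).
  assert (Heq : a * (u / s - 1) + (1 - a) * (/ s - 1) = 0).
  { unfold s in *. field. lra. }
  assert (H3 : a * ln u <= ln s) by lra.
  unfold Rpower. rewrite <- (exp_ln s) by lra.
  destruct (Rle_lt_or_eq_dec _ _ H3) as [Hl|He].
  - left. apply exp_increasing. lra.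
  - rewrite He. lra.
Qed.

Definition pw (m : nat) : R := match m with O => 0 | _ => Rpower (INR m) alpha end.

Lemma pw_S m : (0 < m)%nat -> pw m = Rpower (INR m) alpha.
Proof. destruct m; [lia|reflexivity]. Qed.

Lemma pw_ge1 m : (0 < m)%nat -> 1 <= pw m.
Proof.
  intros Hm. rewrite pw_S by auto.
  rewrite <- (Rpower_O (INR m)) by (apply lt_0_INR; lia).
  apply Rle_Rpower. apply (le_INR 1); lia. destruct alpha_bounds; lra.
Qed.

Lemma pw_ge0 m : 0 <= pw m.
Proof. destruct m. simpl; lra. pose proof (pw_ge1 (S m) ltac:(lia)); lra. Qed.

Lemma pw_mono a b : (a <= b)%nat -> pw a <= pw b.
Proof.
  intros H. destruct a. simpl; apply pw_ge0.
  rewrite !pw_S by lia. apply Rle_Rpower_l. destruct alpha_bounds; lra.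
  split. apply lt_0_INR; lia. apply le_INR; lia.
Qed.

Lemma Rpower_half x : 0 < x -> Rpower (x / 2) alpha = Rpower x alpha / golden_ratio.
Proof.
  intros Hx. rewrite <- Rpower2_alpha.
  assert (Rpower (x/2) alpha * Rpower 2 alpha = Rpower x alpha).
  { rewrite Rpower_mult_distr by lra. f_equal. field. }
  assert (0 < Rpower 2 alpha) by (unfold Rpower; apply exp_pos).
  rewrite <- H. field. lra.
Qed.

Lemma pw_half a m : (0 < m)%nat -> (2 * a <= m)%nat -> pw a <= pw m / golden_ratio.
Proof.
  intros Hm H. destruct a.
  { simpl. destruct phi_bounds. pose proof (pw_ge1 m Hm). unfold Rdiv; apply Rmult_le_pos; [lra| left; apply Rinv_0_lt_compat; lra]. }
  rewrite !pw_S by lia. rewrite <- Rpower_half by (apply lt_0_INR; lia).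
  apply Rle_Rpower_l. destruct alpha_bounds; lra.
  split. apply lt_0_INR; lia. apply le_INR in H. rewrite mult_INR in H. replace (INR 2) with 2 in H by (simpl; lra). lra.
Qed.


Lemma Rpower_pos x y : 0 < Rpower x y.
Proof. unfold Rpower; apply exp_pos. Qed.

Lemma Rpower_quarter x : 0 < x -> Rpower (x / 4) alpha = Rpower x alpha / (golden_ratio * golden_ratio).
Proof.
  intros Hx. replace (x / 4) with ((x / 2) / 2) by field.
  rewrite Rpower_half by lra. rewrite Rpower_half by lra. destruct phi_bounds. field. lra.
Qed.

Lemma pw_key a b m : (0 < m)%nat -> (2 * a <= m)%nat -> (2 * b + a <= m)%nat ->
  pw a + pw b <= pw m.
Proof.
  intros Hm Ha Hb.
  destruct a as [|a'].
  { simpl. rewrite Rplus_0_l. apply pw_mono; lia. }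
  set (a := S a') in *.
  assert (HM : 0 < INR m) by (apply lt_0_INR; lia).
  assert (Hx : 0 < INR a) by (apply lt_0_INR; unfold a; lia).
  apply le_INR in Ha; apply le_INR in Hb. rewrite mult_INR in Ha. rewrite plus_INR, mult_INR in Hb.
  replace (INR 2) with 2 in * by (simpl; lra).
  set (M := INR m) in *. set (x := INR a) in *.
  set (u := 2 * x / M).
  assert (Hu : 0 < u <= 1).
  { unfold u. split. apply Rdiv_lt_0_compat; lra.
    apply (Rmult_le_reg_r M); auto. unfold Rdiv. rewrite Rmult_assoc, Rinv_l; lra. }
  destruct alpha_bounds as [Ha0 Ha1].
  assert (HA : pw a <= Rpower M alpha / golden_ratio * (1 + alpha * (u - 1))).
  { rewrite pw_S by (unfold a; lia). fold x.
    replace x with (M / 2 * u) by (unfold u; field; lra).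
    rewrite <- Rpower_mult_distr by lra. rewrite Rpower_half by lra.
    apply Rmult_le_compat_l.
    - destruct phi_bounds. unfold Rdiv. apply Rmult_le_pos. left; apply Rpower_pos.
      left; apply Rinv_0_lt_compat; lra.
    - apply bernoulli; lra. }
  assert (HB : pw b <= Rpower M alpha / (golden_ratio * golden_ratio) * (1 + alpha * (1 - u))).
  { destruct b as [|b'].
    - simpl. destruct phi_bounds. apply Rmult_le_pos.
      unfold Rdiv. apply Rmult_le_pos. left; apply Rpower_pos.
      left; apply Rinv_0_lt_compat; nra. nra.
    - rewrite pw_S by lia.
      assert (Hy : 0 < INR (S b')) by (apply lt_0_INR; lia).
      apply Rle_trans with (Rpower ((M - x) / 2) alpha).
      + apply Rle_Rpower_l. lra. split; lra.
      + replace ((M - x) / 2) with (M / 4 * (2 - u)) by (unfold u; field; lra).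
        rewrite <- Rpower_mult_distr by lra. rewrite Rpower_quarter by lra.
        apply Rmult_le_compat_l.
        * destruct phi_bounds. unfold Rdiv. apply Rmult_le_pos. left; apply Rpower_pos.
          left; apply Rinv_0_lt_compat; nra.
        * replace (1 + alpha * (1 - u)) with (1 + alpha * ((2 - u) - 1)) by ring.
          apply bernoulli; lra. }
  rewrite pw_S with (m := m) by auto. fold M.
  assert (HP : 0 < Rpower M alpha) by apply Rpower_pos.
  destruct phi_bounds.
  assert (Hphi := phi_sq).
  set (P := Rpower M alpha) in *. set (g := golden_ratio) in *.
  assert (E1 : P / g * (1 + alpha * (u - 1)) + P / (g * g) * (1 + alpha * (1 - u))
     = P * (1 + alpha * (u - 1) * (1 / g - 1 / (g * g)))).
  { assert (Hs : 1 / g + 1 / (g * g) = 1).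
    { replace (1/g + 1/(g*g)) with ((g + 1)/(g*g)) by (field; lra). rewrite <- Hphi. field; lra. }
    transitivity (P * ((1 / g + 1 / (g * g)) + alpha * (u - 1) * (1 / g - 1 / (g * g)))).
    field; lra. rewrite Hs. reflexivity. }
  assert (E2 : 1 / g - 1 / (g * g) = (g - 1) / (g * g)) by (field; lra).
  assert (0 <= (g - 1) / (g * g)).
  { unfold Rdiv. apply Rmult_le_pos. lra. left; apply Rinv_0_lt_compat; nra. }
  assert (alpha * (u - 1) * (1 / g - 1 / (g * g)) <= 0).
  { rewrite E2. assert (alpha * (u - 1) <= 0) by nra. nra. }
  nra.
Qed.

End RealPart.

From mathcomp Require Import all_boot.
From mathcomp Require Import zify.
Delimit Scope R_scope with Re.
Set Implicit Arguments. Unset Strict Implicit. Unset Printing Implicit Defensive.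

Section Tree.
Variable n : nat.
Variable E : rel 'I_n.
Hypothesis HT : directed_tree E.

Lemma Hn : 0 < n. Proof. by case: HT. Qed.
Definition rho : 'I_n := Ordinal Hn.
Definition U := undirected E.

Lemma Usym x y : U x y = U y x.
Proof. by rewrite /U /undirected orbC. Qed.

Lemma Hconn x y : connect U x y. Proof. by case: HT => _ [_ [_ [H _]]]. Qed.
Lemma Hsimple x y : E x y -> ~~ E y x. Proof. by case: HT => _ [_ [H _]]; apply: H. Qed.
Lemma Hcard : #|[set p : 'I_n * 'I_n | E p.1 p.2]| = n.-1. Proof. by case: HT => _ [_ [_ [_ H]]]. Qed.

Definition Qd (v : 'I_n) (k : nat) : bool :=
  [exists s : k.-tuple 'I_n, path U rho s && (last rho s == v)].

Lemma exQd v : exists k, Qd v k.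
Proof.
  have /connectP [s Hp Hl] := Hconn rho v.
  exists (size s). apply/existsP. exists (in_tuple s). by rewrite /= Hp Hl eqxx.
Qed.

Definition d v := ex_minn (exQd v).

Lemma d_spec v : Qd v (d v).
Proof. by rewrite /d; case: ex_minnP. Qed.
Lemma d_min v k : Qd v k -> d v <= k.
Proof. by rewrite /d; case: ex_minnP => m _ H /H. Qed.

Lemma d_rho : d rho = 0.
Proof.
  apply/eqP; rewrite -leqn0; apply: d_min. apply/existsP. exists [tuple]. by rewrite /= eqxx.
Qed.

Lemma d0 v : d v = 0 -> v = rho.
Proof.
  move=> H. have := d_spec v. rewrite H => /existsP [s /andP [_ /eqP]].
  by rewrite tuple0 /= => ->.
Qed.

Lemma d_edge u v : U u v -> d v <= (d u).+1.
Proof.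
  move=> Huv. apply: d_min. have /existsP [s /andP [Hp /eqP Hl]] := d_spec u.
  apply/existsP. have Hs : size (rcons s v) == (d u).+1 by rewrite size_rcons size_tuple.
  exists (Tuple Hs). by rewrite /= rcons_path Hp Hl Huv last_rcons eqxx.
Qed.

Definition par (v : 'I_n) : 'I_n :=
  if v == rho then rho else odflt rho [pick p | U p v && (d p < d v)].

Lemma par_ex v : v != rho -> exists p, U p v && (d p < d v).
Proof.
  move=> Hv. have /existsP [s /andP [Hp /eqP Hl]] := d_spec v.
  have Hd : d v != 0 by apply/eqP => /d0 /eqP; rewrite (negbTE Hv).
  case/lastP: (tval s) Hp Hl (size_tuple s) => [|s' x].
    by move=> _ _ /= H; move: Hd; rewrite -H.
  rewrite rcons_path last_rcons size_rcons => /andP [Hp' Hx] Hxv Hsz.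
  exists (last rho s'). rewrite -Hxv Hx /=.
  have : d (last rho s') <= size s'.
    apply: d_min. apply/existsP. exists (in_tuple s'). by rewrite /= Hp' eqxx.
  rewrite Hxv. lia.
Qed.

Lemma par_spec v : v != rho -> U (par v) v /\ d (par v) = (d v).-1.
Proof.
  move=> Hv. rewrite /par (negbTE Hv).
  case: pickP => [p /andP [Hu Hlt]|H].
    rewrite /=; split => //. have := d_edge Hu. lia.
  have [p Hp] := par_ex Hv. by rewrite H in Hp.
Qed.

Lemma par_rho : par rho = rho.
Proof. by rewrite /par eqxx. Qed.

Lemma d_par v : d (par v) = (d v).-1.
Proof.
  case: (eqVneq v rho) => [->|Hv]; first by rewrite par_rho d_rho.
  by case: (par_spec Hv).
Qed.

Lemma d_pos v : v != rho -> 0 < d v.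
Proof. move=> Hv. case: (posnP (d v)) => // /d0 H. by rewrite H eqxx in Hv. Qed.

Definition fe (v : 'I_n) : 'I_n * 'I_n := if E (par v) v then (par v, v) else (v, par v).

Lemma fe_inj : {in [set~ rho] &, injective fe}.
Proof.
  move=> v w; rewrite !in_setC1 => Hv Hw.
  have Dv := d_par v; have Dw := d_par w; have Pv := d_pos Hv; have Pw := d_pos Hw.
  rewrite /fe; case: ifP; case: ifP => _ _ [H1 H2] //.
  - move: Dv Dw; rewrite H1 -H2. lia.
  - move: Dv Dw; rewrite -H1 H2. lia.
Qed.

Lemma edge_class u v : E u v -> (v != rho /\ par v = u) \/ (u != rho /\ par u = v).
Proof.
  move=> Huv.
  have Hsub : [set fe x | x in [set~ rho]] \subset [set p : 'I_n * 'I_n | E p.1 p.2].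
    apply/subsetP => p /imsetP [x]; rewrite in_setC1 => Hx ->.
    have [Hu _] := par_spec Hx. rewrite inE /fe. case: ifP => //= H.
    by move: Hu; rewrite /U /undirected H.
  have Heq : [set fe x | x in [set~ rho]] = [set p : 'I_n * 'I_n | E p.1 p.2].
    apply/eqP; rewrite eqEcard Hsub /= card_in_imset; last exact: fe_inj.
    by rewrite cardsC1 card_ord Hcard.
  have : (u, v) \in [set p : 'I_n * 'I_n | E p.1 p.2] by rewrite inE.
  rewrite -Heq => /imsetP [x]; rewrite in_setC1 => Hx; rewrite /fe.
  case: ifP => _ [-> ->]; [left|right]; by split.
Qed.

Lemma par_edge v : v != rho -> E (par v) v || E v (par v).
Proof. by move=> /par_spec [H _]. Qed.


Lemma d_iter k w : d (iter k par w) = d w - k.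
Proof. elim: k => [|k IH] /=; first by rewrite subn0. by rewrite d_par IH subnS. Qed.

Lemma iter_rho k w : d w <= k -> iter k par w = rho.
Proof. move=> H. apply: d0. rewrite d_iter. lia. Qed.

Definition anc (v w : 'I_n) : bool := (d v <= d w) && (iter (d w - d v) par w == v).

Lemma ancP v w : reflect (d v <= d w /\ iter (d w - d v) par w = v) (anc v w).
Proof. by apply: (iffP andP) => [[-> /eqP ->]|[-> ->]]. Qed.

Lemma anc_refl v : anc v v.
Proof. by rewrite /anc leqnn subnn eqxx. Qed.

Lemma anc_d v w : anc v w -> d v <= d w.
Proof. by case/andP. Qed.

Lemma anc_trans u v w : anc u v -> anc v w -> anc u w.
Proof.
  move=> /ancP [H1 H2] /ancP [H3 H4]. apply/ancP; split; first lia.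
  have -> : d w - d u = (d v - d u) + (d w - d v) by lia.
  by rewrite iterD H4 H2.
Qed.

Lemma anc_par w : anc (par w) w.
Proof.
  case: (eqVneq w rho) => [->|Hw]; first by rewrite par_rho anc_refl.
  apply/ancP. rewrite d_par. have := d_pos Hw. split; first lia.
  by have -> : d w - (d w).-1 = 1 by lia.
Qed.

Lemma anc_rho w : anc rho w.
Proof. apply/ancP. rewrite d_rho subn0. split => //. exact: iter_rho. Qed.

Lemma anc_eqd v w : anc v w -> d v = d w -> v = w.
Proof. move=> /ancP [_ H] Hd. by rewrite -H Hd subnn. Qed.

Lemma anc_up v w : anc v w -> w != v -> anc v (par w).
Proof.
  move=> /ancP [H1 H2] Hne. have Hlt : d v < d w.
    rewrite ltn_neqAle H1 andbT. apply/eqP => Hd. by rewrite -H2 Hd subnn eqxx in Hne.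
  apply/ancP. rewrite d_par. split; first lia.
  rewrite -[RHS]H2. have -> : d w - d v = (d w).-1 - d v + 1 by lia.
  by rewrite iterD.
Qed.

Lemma anc_same_d a b w : anc a w -> anc b w -> d a = d b -> a = b.
Proof. move=> /ancP [_ Ha] /ancP [_ Hb] Hd. by rewrite -Ha -Hb Hd. Qed.

Lemma anc_total a b w : anc a w -> anc b w -> anc a b || anc b a.
Proof.
  move=> /ancP [Ha1 Ha2] /ancP [Hb1 Hb2].
  case: (leqP (d a) (d b)) => H.
  - apply/orP; left. apply/ancP; split => //.
    transitivity (iter (d b - d a) par (iter (d w - d b) par w)); first by rewrite Hb2.
    rewrite -iterD. by have -> : d b - d a + (d w - d b) = d w - d a by lia.
  - apply/orP; right. apply/ancP; split; first lia.
    transitivity (iter (d a - d b) par (iter (d w - d a) par w)); first by rewrite Ha2.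
    rewrite -iterD. by have -> : d a - d b + (d w - d a) = d w - d b by lia.
Qed.

Definition child (p c : 'I_n) : bool := (c != rho) && (par c == p).

Lemma child_d p c : child p c -> d c = (d p).+1.
Proof. move=> /andP [Hc /eqP <-]. rewrite d_par. have := d_pos Hc. lia. Qed.

Lemma child_anc p c : child p c -> anc p c.
Proof. move=> /andP [_ /eqP <-]. exact: anc_par. Qed.

Lemma child_anc_ne p c : child p c -> c != p.
Proof. move=> H. apply/eqP => E'. have := child_d H. rewrite E'. lia. Qed.

Lemma anc_child v w : anc v w -> w != v -> exists c, child v c && anc c w.
Proof.
  move=> /ancP [H1 H2] Hne. have Hlt : d v < d w.
    rewrite ltn_neqAle H1 andbT. apply/eqP => Hd. by rewrite -H2 Hd subnn eqxx in Hne.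
  exists (iter (d w - d v).-1 par w). apply/andP; split.
  - apply/andP; split.
    + apply/eqP => Hr. have := d_iter (d w - d v).-1 w. rewrite Hr d_rho. lia.
    + rewrite -iterS. have -> : (d w - d v).-1.+1 = d w - d v by lia. by rewrite H2.
  - apply/ancP. rewrite d_iter. split; first lia.
    by have -> : d w - (d w - (d w - d v).-1) = (d w - d v).-1 by lia.
Qed.

Lemma child_anc_trans p c w : child p c -> anc c w -> anc p w.
Proof. move=> /child_anc; exact: anc_trans. Qed.

Lemma child_uniq p c1 c2 w : child p c1 -> child p c2 -> anc c1 w -> anc c2 w -> c1 = c2.
Proof.
  move=> H1 H2 A1 A2. apply: (anc_same_d A1 A2). by rewrite (child_d H1) (child_d H2).
Qed.

Lemma anc_not_below p c : child p c -> ~~ anc c p.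
Proof. move=> H. apply/negP => /anc_d. rewrite (child_d H). lia. Qed.

Lemma anc_par_in c w : anc c w -> w != c -> anc c (par w).
Proof. exact: anc_up. Qed.


Definition T (v : 'I_n) : {set 'I_n} := [set w | anc v w].
Definition sz (v : 'I_n) : nat := #|T v|.

Lemma inT v w : (w \in T v) = anc v w.
Proof. by rewrite inE. Qed.

Lemma sz_pos v : 0 < sz v.
Proof. apply/card_gt0P. exists v. by rewrite inT anc_refl. Qed.

Lemma sz_sub u v : anc u v -> sz v <= sz u.
Proof.
  move=> H. apply: subset_leq_card. apply/subsetP => w. rewrite !inT. exact: anc_trans.
Qed.

Lemma sz_child_lt p c : child p c -> sz c < sz p.
Proof.
  move=> H. apply: proper_card. rewrite properE. apply/andP; split.
  - apply/subsetP => w. rewrite !inT. exact: child_anc_trans.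
  - apply/subsetPn. exists p; first by rewrite inT anc_refl. by rewrite inT anc_not_below.
Qed.

Lemma sz_sum v : sz v = \sum_w (anc v w : nat).
Proof. rewrite /sz -sum1_card big_mkcond /=; apply: eq_bigr => w _; rewrite inT; by case: (anc v w). Qed.

Lemma sum_children v (P : pred 'I_n) :
  (forall c, P c -> child v c) -> \sum_(c | P c) sz c <= (sz v).-1.
Proof.
  move=> HP.
  have -> : \sum_(c | P c) sz c = \sum_w \sum_(c | P c) (anc c w : nat).
    rewrite (eq_bigr (fun c => \sum_w (anc c w : nat))); last by move=> c _; rewrite sz_sum.
    exact: exchange_big.
  have -> : (sz v).-1 = \sum_w ((anc v w) && (w != v) : nat).
    rewrite sz_sum (bigD1 v) //= anc_refl add1n /= big_mkcond. apply: eq_bigr => w _. by case: (w != v); rewrite ?andbT ?andbF.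
  apply: leq_sum => w _.
  case: (pickP (fun c => P c && anc c w)) => [c /andP [Pc Ac]|H].
  - rewrite (bigD1 c) //= Ac big1.
    + have Hv : anc v w by apply: child_anc_trans (HP _ Pc) Ac.
      have Hne : w != v.
        apply/eqP => Ew. have := anc_d Ac. rewrite Ew (child_d (HP _ Pc)). lia.
      by rewrite Hv Hne.
    + move=> c' /andP [Pc' Hne]. case: (boolP (anc c' w)) => // Ac'.
      by rewrite (child_uniq (HP _ Pc') (HP _ Pc) Ac' Ac) eqxx in Hne.
  - rewrite big1 // => c Pc. by have := H c; rewrite Pc /= => ->.
Qed.

Definition heavy (p : 'I_n) : 'I_n :=
  if [pick c | child p c] is Some c0 then [arg max_(c > c0 | child p c) sz c] else p.

Lemma heavy_spec p c : child p c -> child p (heavy p) /\ sz c <= sz (heavy p).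
Proof.
  move=> Hc. rewrite /heavy. case: pickP => [c0 Hc0|H]; last by have := H c; rewrite Hc.
  case: arg_maxnP => // h Hh Hmax. split => //. exact: Hmax.
Qed.

(* ---------- sibling order and preorder positions ---------- *)
Definition keyc (s : 'I_n) : nat := (s == heavy (par s)) * n + s.

Lemma keyc_inj p a b : child p a -> child p b -> keyc a = keyc b -> a = b.
Proof.
  move=> /andP [_ /eqP Ha] /andP [_ /eqP Hb]. rewrite /keyc Ha Hb.
  have La := ltn_ord a; have Lb := ltn_ord b.
  case: (a == heavy p); case: (b == heavy p) => /= H; apply: val_inj => /=; lia.
Qed.

Lemma keyc_heavy p a : child p a -> a != heavy p -> keyc a < keyc (heavy p).
Proof.
  move=> Ha Hne. have [Hh _] := heavy_spec Ha.
  move: Ha Hh => /andP [_ /eqP Ha] /andP [_ /eqP Hh]. rewrite /keyc Ha Hh eqxx (negbTE Hne).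
  have := ltn_ord a. simpl. lia.
Qed.

Definition lsum (v : 'I_n) : nat := \sum_(s | child (par v) s && (keyc s < keyc v)) sz s.

Fixpoint lok (k : nat) (v : 'I_n) : nat :=
  if k is k'.+1 then lok k' (par v) + 1 + lsum v else 0.

Definition lo (v : 'I_n) : nat := lok (d v) v.

Lemma lo_eq v : v != rho -> lo v = lo (par v) + 1 + lsum v.
Proof.
  move=> Hv. rewrite /lo d_par. have := d_pos Hv. by case: (d v).
Qed.

Lemma lo_child p c : child p c -> lo c = lo p + 1 + \sum_(s | child p s && (keyc s < keyc c)) sz s.
Proof. move=> H. move: (H) => /andP [Hc /eqP Hp]. by rewrite lo_eq // /lsum Hp. Qed.

Lemma lo_child_lt p c : child p c -> lo p < lo c.
Proof. move=> H. rewrite (lo_child H). lia. Qed.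

Lemma lo_child_end p c : child p c -> lo c + sz c <= lo p + sz p.
Proof.
  move=> H. rewrite (lo_child H).
  have Hs := @sum_children p (fun s => child p s && ((keyc s < keyc c) || (s == c))).
  have : \sum_(s | child p s && ((keyc s < keyc c) || (s == c))) sz s <= (sz p).-1.
    apply: Hs => s /andP [] //.
  rewrite (bigD1 c) /=; last by rewrite H eqxx orbT.
  have -> : \sum_(i | (child p i && ((keyc i < keyc c) || (i == c))) && (i != c)) sz i =
            \sum_(s | child p s && (keyc s < keyc c)) sz s.
    apply: eq_bigl => s. case: (eqVneq s c) => [->|Hne]; first by rewrite ltnn /= !andbF.
    by rewrite orbF andbT.
  move=> H0. have Hp := sz_pos p. rewrite -!addnA leq_add2l add1n -(prednK Hp) ltnS addnC. exact: H0.
Qed.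

Lemma lo_sib p a b : child p a -> child p b -> keyc a < keyc b -> lo a + sz a <= lo b.
Proof.
  move=> Ha Hb Hk. rewrite (lo_child Ha) (lo_child Hb).
  rewrite -!addnA !leq_add2l.
  have -> : \sum_(s | child p s && (keyc s < keyc a)) sz s + sz a =
            \sum_(s | child p s && ((keyc s < keyc a) || (s == a))) sz s.
    rewrite [RHS](bigD1 a) /=; last by rewrite Ha eqxx orbT.
    rewrite addnC. congr (_ + _). apply: eq_bigl => s.
    case: (eqVneq s a) => [->|Hne]; first by rewrite ltnn /= !andbF.
    by rewrite orbF andbT.
  rewrite [X in X <= _]big_mkcond [X in _ <= X]big_mkcond /=. apply: leq_sum => s _.
  case: (boolP (child p s)) => //= Hs. case: (eqVneq s a) => [->|Hne]; first by rewrite Hk orbT.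
  rewrite orbF. case: ifP => // H. by rewrite (ltn_trans H Hk).
Qed.

Lemma lo_range_k k : forall v w, d w - d v = k -> anc v w -> lo v <= lo w < lo v + sz v.
Proof.
  elim: k => [|k IH] v w Hk Hvw.
  - have Hd := anc_d Hvw. have -> : w = v by symmetry; apply: anc_eqd Hvw _; lia.
    have := sz_pos v. lia.
  - have Hne : w != v. apply/eqP => E'. by rewrite E' subnn in Hk.
    have [c /andP [Hc Acw]] := anc_child Hvw Hne.
    have := IH c w ltac:(rewrite (child_d Hc); lia) Acw.
    have := lo_child_lt Hc. have := lo_child_end Hc. lia.
Qed.

Lemma lo_range v w : anc v w -> lo v <= lo w < lo v + sz v.
Proof. exact: lo_range_k. Qed.

Lemma lo_inj_k k : forall v, sz v <= k -> forall w1 w2, anc v w1 -> anc v w2 -> lo w1 = lo w2 -> w1 = w2.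
Proof.
  elim: k => [|k IH] v Hk w1 w2 A1 A2 Hlo; first by have := sz_pos v; lia.
  case: (eqVneq w1 v) => [E1|N1]; case: (eqVneq w2 v) => [E2|N2].
  - by rewrite E1 E2.
  - have [c /andP [Hc Ac]] := anc_child A2 N2. have := lo_range Ac. have := lo_child_lt Hc.
    rewrite -Hlo E1. lia.
  - have [c /andP [Hc Ac]] := anc_child A1 N1. have := lo_range Ac. have := lo_child_lt Hc.
    rewrite Hlo E2. lia.
  - have [c1 /andP [Hc1 Ac1]] := anc_child A1 N1. have [c2 /andP [Hc2 Ac2]] := anc_child A2 N2.
    case: (eqVneq c1 c2) => [Ec|Nc].
    + subst c2. apply: (IH c1) => //. have := sz_child_lt Hc1. lia.
    + have R1 := lo_range Ac1; have R2 := lo_range Ac2.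
      have : keyc c1 != keyc c2. apply/eqP => /(keyc_inj Hc1 Hc2) E'. by rewrite E' eqxx in Nc.
      rewrite neq_ltn => /orP [] Hk'.
      * have := lo_sib Hc1 Hc2 Hk'. lia.
      * have := lo_sib Hc2 Hc1 Hk'. lia.
Qed.

Lemma lo_inj w1 w2 : lo w1 = lo w2 -> w1 = w2.
Proof. apply: (@lo_inj_k n rho) => //; [|exact: anc_rho|exact: anc_rho]. apply: leq_trans (max_card _) _. by rewrite card_ord. Qed.

Lemma lo_onto v k : lo v <= k < lo v + sz v -> exists w, anc v w /\ lo w = k.
Proof.
  move=> Hk.
  set s := [seq lo w | w <- enum (T v)].
  have Us : uniq s.
    rewrite map_inj_in_uniq ?enum_uniq // => w1 w2 _ _. exact: lo_inj.
  have Ss : {subset s <= iota (lo v) (sz v)}.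
    move=> x /mapP [w]. rewrite mem_enum inT => Aw ->. rewrite mem_iota. exact: lo_range.
  have Sz : size (iota (lo v) (sz v)) <= size s by rewrite size_iota size_map -cardE.
  have [_ Heq] := uniq_min_size Us Ss Sz.
  have : k \in s by rewrite Heq mem_iota.
  case/mapP => w. rewrite mem_enum inT => Aw ->. by exists w.
Qed.

Lemma F3 q c d0 : child q d0 -> lo q < lo c -> lo c < lo d0 ->
  exists d', [/\ child q d', anc d' c & keyc d' < keyc d0].
Proof.
  move=> Hd H1 H2.
  have R := lo_range (child_anc Hd). have Rd := lo_range (child_anc Hd).
  have [w [Aw Hw]] := lo_onto (v := q) (k := lo c) ltac:(have := lo_range (child_anc Hd); lia).
  have Ewc := lo_inj Hw. subst w.
  have Hne : c != q. apply/eqP => E'. move: H1. rewrite E'. lia.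
  have [d' /andP [Hd' Ad']] := anc_child Aw Hne.
  exists d'; split => //.
  have : keyc d' != keyc d0.
    apply/eqP => /(keyc_inj Hd' Hd) E'. subst d'. have := lo_range Ad'. lia.
  rewrite neq_ltn => /orP [] // Hk.
  have := lo_sib Hd Hd' Hk. have := lo_range Ad'. lia.
Qed.


Lemma two_children p a b : child p a -> child p b -> a != b -> sz a + sz b < sz p.
Proof.
  move=> Ha Hb Hab.
  have := @sum_children p (mem [:: a; b]) ltac:(move=> c; rewrite !inE => /orP [] /eqP -> //).
  rewrite -big_uniq /=; last by rewrite !inE Hab.
  rewrite !big_cons big_nil addn0. have := sz_pos p. lia.
Qed.

Lemma three_children p a b c : child p a -> child p b -> child p c ->
  a != b -> a != c -> b != c -> sz a + sz b + sz c < sz p.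
Proof.
  move=> Ha Hb Hc Hab Hac Hbc.
  have := @sum_children p (mem [:: a; b; c])
    ltac:(move=> x; rewrite !inE => /orP [/eqP ->|/orP [] /eqP ->] //).
  rewrite -big_uniq /=; last by rewrite !inE negb_or Hab Hac Hbc.
  rewrite !big_cons big_nil addn0. have := sz_pos p. lia.
Qed.

(* ---------- heavy paths (spines) ---------- *)
Definition hv (v : 'I_n) : bool := (v != rho) && (heavy (par v) == v).

Fixpoint topk (k : nat) (v : 'I_n) : 'I_n :=
  if k is k'.+1 then (if hv v then topk k' (par v) else v) else v.

Definition top (v : 'I_n) : 'I_n := topk (d v) v.

Lemma top_eq v : top v = if hv v then top (par v) else v.
Proof.
  rewrite /top. case: (eqVneq v rho) => [->|Hv].
    by rewrite d_rho /hv eqxx.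
  rewrite d_par. have := d_pos Hv. by case: (d v).
Qed.

Lemma top_ind (P : 'I_n -> Prop) :
  (forall v, (v != rho -> P (par v)) -> P v) -> forall v, P v.
Proof.
  move=> H v. move: {2}(d v) (leqnn (d v)) => k. elim: k v => [|k IH] v Hk.
  - apply: H => Hv. have := d_pos Hv. lia.
  - apply: H => Hv. apply: IH. rewrite d_par. lia.
Qed.

Lemma top_anc v : anc (top v) v.
Proof.
  elim/top_ind: v => v IH. rewrite top_eq. case: ifP => H; last exact: anc_refl.
  move: (H) => /andP [Hv _]. apply: anc_trans (IH Hv) (anc_par v).
Qed.

Lemma top_not_hv v : ~~ hv (top v).
Proof.
  elim/top_ind: v => v IH. rewrite top_eq. case: ifP => H; last by rewrite H.
  move: (H) => /andP [Hv _]. exact: IH.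
Qed.

Lemma top_top v : top (top v) = top v.
Proof. by rewrite top_eq (negbTE (top_not_hv v)). Qed.

Lemma top_chain w a : anc (top w) a -> anc a w -> top a = top w.
Proof.
  elim/top_ind: w a => w IH a A1 A2.
  case: (eqVneq a w) => [->//|Hne].
  have Ap := anc_up A2 ltac:(by rewrite eq_sym).
  move: A1. rewrite top_eq. case: ifP => H A1.
  - move: (H) => /andP [Hw _]. exact: IH Hw a A1 Ap.
  - have D1 := anc_d A1; have D2 := anc_d A2.
    have E' := anc_eqd A1 ltac:(lia). by rewrite E' eqxx in Hne.
Qed.

Lemma top_same_d a b : top a = top b -> d a = d b -> a = b.
Proof.
  elim/top_ind: a b => a IH b Ht Hd.
  move: Ht. rewrite (top_eq a) (top_eq b).
  case: (boolP (hv a)) => Ha; case: (boolP (hv b)) => Hb Ht.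
  - move: (Ha) (Hb) => /andP [Ha' /eqP Ea] /andP [Hb' /eqP Eb].
    have Ep : par a = par b by apply: IH => //; rewrite !d_par Hd.
    by rewrite -Ea -Eb Ep.
  -
    have A := top_anc (par a). move: (Ha) => /andP [Ha' _].
    have := anc_d A. rewrite Ht d_par -Hd. have := d_pos Ha'. lia.
  - have A := top_anc (par b). move: (Hb) => /andP [Hb' _].
    have := anc_d A. rewrite -Ht d_par Hd. have := d_pos Hb'. lia.
  - by [].
Qed.

Lemma spine_cmp a b : top a = top b -> d a <= d b -> anc a b.
Proof.
  move=> Ht Hd.
  set a' := iter (d b - d a) par b.
  have Aa' : anc a' b. apply/ancP. rewrite /a' d_iter. split; first lia.
    by have -> : d b - (d b - (d b - d a)) = d b - d a by lia.
  have Dc : d (top b) <= d a' by rewrite /a' d_iter -Ht; have := anc_d (top_anc a); lia.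
  have Ac : anc (top b) a'.
    case/orP: (anc_total (top_anc b) Aa') => // H. by rewrite (anc_eqd H ltac:(have := anc_d H; lia)) anc_refl.
  have Ta' := top_chain Ac Aa'.
  have -> : a = a'. apply: top_same_d; first by rewrite Ta' Ht.
    rewrite /a' d_iter. lia.
  exact: Aa'.
Qed.

Lemma spine_heavy a b : top a = top b -> anc a b -> a != b -> child a (heavy a) /\ anc (heavy a) b.
Proof.
  move=> Ht A Hne. have [c /andP [Hc Acb]] := anc_child A ltac:(by rewrite eq_sym).
  have Tc : top c = top b. apply: top_chain Acb. rewrite -Ht. exact: anc_trans (top_anc a) (child_anc Hc).
  have : hv c. apply/negPn/negP => H. move: Tc. rewrite top_eq (negbTE H) => E'.
    have := anc_d (top_anc a). rewrite Ht -E' (child_d Hc). lia.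
  move=> /andP [_ /eqP Hh]. move: (Hc) => /andP [_ /eqP Hp]. have -> : heavy a = c by rewrite -Hp. by split.
Qed.

Definition flag (c c' : 'I_n) : bool := (c' != rho) && (heavy (par c') != c') && (top (par c') == c).

Lemma flag_child c c' : flag c c' -> child (par c') c'.
Proof. by case/andP => /andP [H _] _; rewrite /child H eqxx. Qed.

Lemma flag_anc c c' : flag c c' -> anc c (par c').
Proof. case/andP => _ /eqP <-. exact: top_anc. Qed.

Lemma flag_size c c' : flag c c' -> (2 * sz c' + 1 <= sz c).
Proof.
  move=> Hf. have Hc := flag_child Hf. have [Hh Hs] := heavy_spec Hc.
  have Hne : c' != heavy (par c') by move: Hf => /andP [/andP [_ H] _]; rewrite eq_sym.
  have := two_children Hc Hh Hne. have := sz_sub (flag_anc Hf). lia.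
Qed.

Lemma flag_pair c c1 c2 : flag c c1 -> flag c c2 -> c1 != c2 ->
  (2 * sz c2 + sz c1 + 1 <= sz c) \/ (2 * sz c1 + sz c2 + 1 <= sz c).
Proof.
  move=> F1 F2 Hne.
  have H1 := flag_child F1; have H2 := flag_child F2.
  have [Hh1 Hs1] := heavy_spec H1; have [Hh2 Hs2] := heavy_spec H2.
  have N1 : c1 != heavy (par c1) by move: F1 => /andP [/andP [_ H] _]; rewrite eq_sym.
  have N2 : c2 != heavy (par c2) by move: F2 => /andP [/andP [_ H] _]; rewrite eq_sym.
  have T1 : top (par c1) = c by case/andP: F1 => _ /eqP.
  have T2 : top (par c2) = c by case/andP: F2 => _ /eqP.
  have S1 := sz_sub (flag_anc F1); have S2 := sz_sub (flag_anc F2).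
  case: (ltngtP (d (par c1)) (d (par c2))) => Hd.
  - have A := spine_cmp (etrans T1 (esym T2)) (ltnW Hd).
    have Np : par c1 != par c2 by apply/eqP => E'; rewrite E' ltnn in Hd.
    have [_ Ah] := spine_heavy (etrans T1 (esym T2)) A Np.
    have := sz_sub Ah. have := two_children H1 Hh1 N1. have := two_children H2 Hh2 N2.
    left. lia.
  - have A := spine_cmp (etrans T2 (esym T1)) (ltnW Hd).
    have Np : par c2 != par c1 by apply/eqP => E'; rewrite E' ltnn in Hd.
    have [_ Ah] := spine_heavy (etrans T2 (esym T1)) A Np.
    have := sz_sub Ah. have := two_children H1 Hh1 N1. have := two_children H2 Hh2 N2.
    right. lia.
  - have Ep : par c1 = par c2 by apply: top_same_d => //; rewrite T1 T2.
    move: H2 Hh2 Hs2 N2 S2. rewrite -Ep => H2 Hh2 Hs2 N2 S2.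
    have := three_children H1 H2 Hh1 Hne N1 N2.
    case: (leqP (sz c1) (sz c2)) => _ ?; [left|right]; lia.
Qed.


Variable l : nat.
Hypothesis HL : longest_path_length E l.

Definition PL (v : 'I_n) (k : nat) : bool :=
  [exists x, [exists s : k.-tuple 'I_n, path E x s && (last x s == v)]].

Lemma exPL v : exists k, PL v k.
Proof. exists 0. apply/existsP; exists v. apply/existsP; exists [tuple]. by rewrite /= eqxx. Qed.

Lemma ubPL v k : PL v k -> k <= l.
Proof.
  case/existsP => x /existsP [s /andP [Hp _]]. case: HL => _ H.
  rewrite -(size_tuple s). exact: H x s Hp.
Qed.

Definition lp (v : 'I_n) : nat := ex_maxn (exPL v) (@ubPL v).

Lemma lp_le v : lp v <= l.
Proof. rewrite /lp. case: ex_maxnP => k Hk _. exact: ubPL Hk. Qed.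

Lemma lp_edge u v : E u v -> lp u < lp v.
Proof.
  move=> Huv. rewrite /lp. case: ex_maxnP => k Hk _. case: ex_maxnP => k' _ Hmax.
  apply: Hmax. case/existsP: Hk => x /existsP [s /andP [Hp /eqP Hl]].
  apply/existsP; exists x. have Hs : size (rcons s v) == k.+1 by rewrite size_rcons size_tuple.
  apply/existsP; exists (Tuple Hs). by rewrite /= rcons_path Hp Hl Huv last_rcons eqxx.
Qed.

Open Scope Z_scope.

Definition G (m : nat) : R := (3 * INR (l + 4) * pw m - INR (l + 4))%Re.
Definition gi (m : nat) : Z := up (G m).

Definition upflag (c x : 'I_n) : bool := flag c x && E (par x) x.
Definition downflag (c x : 'I_n) : bool := flag c x && E x (par x).

Definition Amax (c : 'I_n) : nat := (\max_(x | upflag c x) sz x)%N.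
Definition Bmax (c : 'I_n) : nat := (\max_(x | downflag c x) sz x)%N.

Definition Ub (c : 'I_n) : Z := Z.of_nat l + (if Amax c == 0%N then 0 else 1 + gi (Amax c)).
Definition Db (c : 'I_n) : Z := if Bmax c == 0%N then 0 else 1 + gi (Bmax c).

Fixpoint offk (k : nat) (v : 'I_n) : Z :=
  if k is k'.+1 then
    (if hv v then offk k' (par v)
     else if E (par v) v then offk k' (par v) + Z.of_nat (lp (par v)) + 1 + Db v
     else offk k' (par v) + Z.of_nat (lp (par v)) - 1 - Ub v)
  else 0.

Definition off (v : 'I_n) : Z := offk (d v) v.
Definition y (v : 'I_n) : Z := off v + Z.of_nat (lp v).

Lemma off_eq v : v != rho ->
  off v = if hv v then off (par v) else if E (par v) v then y (par v) + 1 + Db v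
          else y (par v) - 1 - Ub v.
Proof.
  move=> Hv. rewrite /y /off d_par. have := d_pos Hv. case: (d v) => //= k _.
Qed.

Lemma pw_ge1' m : (0 < m)%N -> (1 <= pw m)%Re.
Proof. move=> H. apply: pw_ge1. by apply/ltP. Qed.
Lemma pw_mono' a b : (a <= b)%N -> (pw a <= pw b)%Re.
Proof. move=> H. apply: pw_mono. by apply/leP. Qed.
Lemma pw_half' a m : (0 < m)%N -> (2 * a <= m)%N -> (pw a <= pw m / golden_ratio)%Re.
Proof. move=> H1 H2. apply: pw_half; by apply/leP. Qed.
Lemma pw_key' a b m : (0 < m)%N -> (2 * a <= m)%N -> (2 * b + a <= m)%N -> (pw a + pw b <= pw m)%Re.
Proof. move=> H1 H2 H3. apply: pw_key; by apply/leP. Qed.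

Lemma INR_l4 : (1 <= INR (l + 4))%Re.
Proof. apply: (le_INR 1). lia. Qed.

Lemma G_nonneg m : (0 < m)%N -> (0 <= G m)%Re.
Proof. move=> Hm. have := pw_ge1' Hm. have := INR_l4. rewrite /G. nra. Qed.

Lemma G_mono a b : (a <= b)%N -> (G a <= G b)%Re.
Proof. move=> H. have := pw_mono' H. have := INR_l4. rewrite /G. nra. Qed.

Lemma gi_spec m : (G m < IZR (gi m))%Re /\ (IZR (gi m) <= G m + 1)%Re.
Proof. rewrite /gi. have [H1 H2] := archimed (G m). split; lra. Qed.

Lemma gi_pos m : (0 < m)%N -> 0 < gi m.
Proof. move=> Hm. apply: lt_IZR. have := G_nonneg Hm. have := gi_spec m. lra. Qed.

Lemma gi_mono a b : (a <= b)%N -> gi a <= gi b.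
Proof.
  move=> H. have := G_mono H. have [A1 A2] := gi_spec a. have [B1 B2] := gi_spec b.
  move=> HG. have : gi a - 1 < gi b. apply: lt_IZR. rewrite minus_IZR. lra. lia.
Qed.

Lemma Db_ge0 c : 0 <= Db c.
Proof.
  rewrite /Db. case: ifP => // /negbT H. have := gi_pos (m := Bmax c) ltac:(by rewrite lt0n). lia.
Qed.

Lemma Ub_ge c : Z.of_nat l <= Ub c.
Proof.
  rewrite /Ub. case: ifP => [_|/negbT H]; first lia.
  have := gi_pos (m := Amax c) ltac:(by rewrite lt0n). lia.
Qed.

Lemma bigmax_wit (P : pred 'I_n) (F : 'I_n -> nat) :
  (\max_(i | P i) F i)%N != 0%N -> exists i, P i /\ F i = (\max_(i | P i) F i)%N.
Proof.
  move=> H. case: (posnP #|P|) => Hc.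
  - move: H. rewrite big_pred0 //. move=> i. apply/negbTE/negP => Pi.
    have : (0 < #|P|)%N by apply/card_gt0P; exists i. by rewrite Hc.
  - have [i Pi Hi] := @eq_bigmax_cond _ P F Hc. by exists i; split.
Qed.


Lemma flag_ne_rho c x : flag c x -> x != rho.
Proof. by case/andP => /andP []. Qed.

Lemma up_down_ne c x1 x2 : upflag c x1 -> downflag c x2 -> x1 != x2.
Proof.
  move=> /andP [_ H1] /andP [_ H2]. apply/eqP => E'. subst x2.
  by rewrite (negbTE (Hsimple H1)) in H2.
Qed.

Lemma sz_le_n v : (sz v <= n)%N.
Proof. apply: leq_trans (max_card _) _. by rewrite card_ord. Qed.

Lemma UbDb_key c : top c = c -> (IZR (Ub c + Db c) <= G (sz c))%Re.
Proof.
  move=> Hc. have Hm := sz_pos c. have L4 := INR_l4.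
  have Hl : IZR (Z.of_nat l) = INR l by rewrite -INR_IZR_INZ.
  have Hl4 : INR (l + 4) = (INR l + 4)%Re by rewrite plus_INR; simpl; lra.
  have Pm := pw_ge1' Hm.
  rewrite /Ub /Db /G. rewrite Hl4 in L4 *.
  case: (eqVneq (Amax c) 0%N) => HA; case: (eqVneq (Bmax c) 0%N) => HB.
  - rewrite Z.add_0_r Z.add_0_r Hl. have := pos_INR l. nra.
  - have [x [Hx Ex]] := bigmax_wit HB. have Fs := flag_size (proj1 (andP Hx)).
    have Ex' : Bmax c = sz x by rewrite /Bmax -Ex.
    have := @pw_half' (sz x) (sz c) Hm ltac:(lia).
    have [_ Gi] := gi_spec (Bmax c). rewrite /G Hl4 in Gi.
    rewrite Ex' in Gi *. move=> Hh.
    rewrite Z.add_0_r !plus_IZR Hl.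
    have [g1 g2] := phi_bounds. have Hg := phi_sq.
    have : (pw (sz c) / golden_ratio <= pw (sz c) * 2 / 3)%Re.
      apply: (Rmult_le_reg_r golden_ratio); first lra.
      rewrite /Rdiv Rmult_assoc Rinv_l; nra.
    nra.
  - have [x [Hx Ex]] := bigmax_wit HA. have Fs := flag_size (proj1 (andP Hx)).
    have Ex' : Amax c = sz x by rewrite /Amax -Ex.
    have := @pw_half' (sz x) (sz c) Hm ltac:(lia).
    have [_ Gi] := gi_spec (Amax c). rewrite /G Hl4 in Gi.
    rewrite Ex' in Gi *. move=> Hh.
    rewrite Z.add_0_r !plus_IZR Hl.
    have [g1 g2] := phi_bounds. have Hg := phi_sq.
    have : (pw (sz c) / golden_ratio <= pw (sz c) * 2 / 3)%Re.
      apply: (Rmult_le_reg_r golden_ratio); first lra.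
      rewrite /Rdiv Rmult_assoc Rinv_l; nra.
    nra.
  - have [x1 [Hx1 Ex1]] := bigmax_wit HA. have [x2 [Hx2 Ex2]] := bigmax_wit HB.
    have Hne := up_down_ne Hx1 Hx2.
    have F1 := proj1 (andP Hx1); have F2 := proj1 (andP Hx2).
    have S1 := flag_size F1; have S2 := flag_size F2.
    have Hk : (pw (sz x1) + pw (sz x2) <= pw (sz c))%Re.
      case: (flag_pair F1 F2 Hne) => H.
      + apply: pw_key'; lia.
      + rewrite Rplus_comm. apply: pw_key'; lia.
    have [_ G1] := gi_spec (Amax c). have [_ G2] := gi_spec (Bmax c).
    have Ex1' : Amax c = sz x1 by rewrite /Amax -Ex1.
    have Ex2' : Bmax c = sz x2 by rewrite /Bmax -Ex2.
    rewrite /G Hl4 Ex1' in G1. rewrite /G Hl4 Ex2' in G2. rewrite Ex1' Ex2'.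
    rewrite !plus_IZR Hl. nra.
Qed.

Lemma top_not_hv_eq v : ~~ hv v -> top v = v.
Proof. move=> H. by rewrite top_eq (negbTE H). Qed.

Lemma spine_off c w : anc c w -> top w = c -> off w = off c.
Proof.
  elim/top_ind: w => w IH A Tw.
  case: (eqVneq w c) => [->//|Hne].
  have Hh : hv w. apply/negPn/negP => H. by rewrite top_not_hv_eq // in Tw; rewrite Tw eqxx in Hne.
  move: (Hh) => /andP [Hw _]. rewrite off_eq // Hh. apply: IH => //.
  - exact: anc_up A Hne.
  - by rewrite -Tw [RHS]top_eq Hh.
Qed.

Lemma decomp c w : top c = c -> anc c w -> top w = c \/ exists x, flag c x /\ anc x w.
Proof.
  move=> Hc. elim/top_ind: w => w IH A.
  case: (eqVneq w c) => [->|Hne]; first by left.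
  have Hw : w != rho. apply/eqP => E'. have := anc_d A. rewrite E' d_rho.
    move=> H. have : d c = 0%N by lia. move/d0 => Ec. by rewrite E' Ec eqxx in Hne.
  case: (IH Hw (anc_up A Hne)) => [Tp|[x [Fx Ax]]].
  - case: (boolP (hv w)) => H.
    + left. by rewrite top_eq H.
    + right. exists w. split; last exact: anc_refl.
      rewrite /flag Hw Tp eqxx /= andbT. move: H. by rewrite /hv Hw.
  - right. exists x. split => //. exact: anc_trans Ax (anc_par w).
Qed.

Lemma flag_top c x : flag c x -> top x = x.
Proof.
  move=> F. apply: top_not_hv_eq. rewrite /hv. case/andP: F => /andP [_ H] _. by rewrite (negbTE H) andbF.
Qed.

Lemma flag_lt c x : flag c x -> (sz x < sz c)%N.
Proof.
  move=> F. have := sz_child_lt (flag_child F). have := sz_sub (flag_anc F). lia.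
Qed.

Lemma flag_ypar c x : top c = c -> flag c x -> y (par x) = off c + Z.of_nat (lp (par x)).
Proof.
  move=> Hc F. rewrite /y (spine_off (flag_anc F)) //. by case/andP: F => _ /eqP.
Qed.

Lemma flag_off c x : flag c x ->
  off x = if E (par x) x then y (par x) + 1 + Db x else y (par x) - 1 - Ub x.
Proof.
  move=> F. rewrite off_eq; last exact: flag_ne_rho F.
  have -> : hv x = false. rewrite /hv. by case/andP: F => /andP [_ /negbTE ->]; rewrite andbF.
  done.
Qed.

Lemma key_lt c : top c = c -> Ub c + Db c < gi (sz c).
Proof.
  move=> Hc. apply: lt_IZR. have := UbDb_key Hc. have [H _] := gi_spec (sz c). lra.
Qed.

Lemma extents_k k : forall c, (sz c <= k)%N -> top c = c -> forall w, anc c w ->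
  off c - Db c <= y w <= off c + Ub c.
Proof.
  elim: k => [|k IH] c Hk Hc w A; first by have := sz_pos c; lia.
  have Ll := @Ub_ge c. have Dl := @Db_ge0 c.
  case: (decomp Hc A) => [Tw|[x [Fx Ax]]].
  - rewrite /y (spine_off A Tw). have := lp_le w. lia.
  - have IHx := IH x ltac:(have := flag_lt Fx; lia) (flag_top Fx) w Ax.
    have Yp := flag_ypar Hc Fx. have Lp := lp_le (par x).
    have Kx := @key_lt x (flag_top Fx). have Dx := @Db_ge0 x. have Ux := @Ub_ge x.
    have Of := flag_off Fx.
    move: Of; case: ifP => He Of.
    +
      have Uf : upflag c x by rewrite /upflag Fx He.
      have Sa : (sz x <= Amax c)%N by apply: leq_bigmax_cond.
      have HA : Amax c != 0%N by rewrite -lt0n; apply: leq_trans Sa; exact: sz_pos.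
      have Gm := gi_mono Sa.
      have -> : Ub c = Z.of_nat l + (1 + gi (Amax c)) by rewrite /Ub (negbTE HA).
      lia.
    + have He' : E x (par x). by move: (par_edge (flag_ne_rho Fx)); rewrite He.
      have Df : downflag c x by rewrite /downflag Fx He'.
      have Sb : (sz x <= Bmax c)%N by apply: leq_bigmax_cond.
      have HB : Bmax c != 0%N by rewrite -lt0n; apply: leq_trans Sb; exact: sz_pos.
      have Gm := gi_mono Sb.
      have -> : Db c = 1 + gi (Bmax c) by rewrite /Db (negbTE HB).
      lia.
Qed.

Lemma extents c w : top c = c -> anc c w -> off c - Db c <= y w <= off c + Ub c.
Proof. move=> Hc A. exact: (@extents_k (sz c) c (leqnn _) Hc w A). Qed.

Lemma y_edge u v : E u v -> y u < y v.
Proof.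
  move=> Huv. have Lu := lp_edge Huv. have L1 := lp_le u; have L2 := lp_le v.
  case: (edge_class Huv) => [[Hv Hp]|[Hu Hp]].
  - rewrite /y [off v]off_eq // Hp. case: ifP => _; first lia.
    rewrite Huv /y. have := @Db_ge0 v. lia.
  - rewrite /y [off u]off_eq // Hp. case: ifP => _; first lia.
    rewrite (negbTE (Hsimple Huv)) /y. have := @Ub_ge u. lia.
Qed.

Lemma side q c : child q c -> c != heavy q ->
  (forall w, anc c w -> y q < y w) \/ (forall w, anc c w -> y w < y q).
Proof.
  move=> Hc Hne. move: (Hc) => /andP [Hr /eqP Hp].
  have Nh : ~~ hv c by rewrite /hv Hp [heavy q == c]eq_sym (negbTE Hne) andbF.
  have Tc := top_not_hv_eq Nh.
  have Of := off_eq Hr. rewrite (negbTE Nh) Hp in Of.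
  move: Of; case: ifP => He Of; [left|right] => w A;
    have := extents Tc A; rewrite Of; have := @Db_ge0 c; have := @Ub_ge c; lia.
Qed.

Lemma y_span u v : E u v ->
  (IZR (y v - y u) <= 3 * INR (l + 4) * pw n)%Re.
Proof.
  move=> Huv. have Lu := lp_edge Huv. have L1 := lp_le u; have L2 := lp_le v.
  have Hl : IZR (Z.of_nat l) = INR l by rewrite -INR_IZR_INZ.
  have Hl4 : INR (l + 4) = (INR l + 4)%Re by rewrite plus_INR; simpl; lra.
  have Pn := pw_ge1' Hn. have Pl := pos_INR l.
  have B : forall m : nat, (m <= n)%N -> (IZR (Z.of_nat l + 3 + gi m) <= 3 * INR (l + 4) * pw n)%Re.
    move=> m Hm. have [_ Gi] := gi_spec m. have Gm := G_mono Hm.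
    rewrite !plus_IZR Hl. rewrite /G Hl4 in Gi Gm *. lra.
  have Bz : forall z : Z, forall m : nat, (m <= n)%N -> z <= Z.of_nat l + 3 + gi m ->
      (IZR z <= 3 * INR (l + 4) * pw n)%Re.
    move=> z m Hm Hz. apply: Rle_trans (B m Hm). exact: IZR_le.
  have B0 : (IZR (Z.of_nat l) <= 3 * INR (l + 4) * pw n)%Re.
    rewrite Hl Hl4. nra.
  have Bl : forall z : Z, z <= Z.of_nat l -> (IZR z <= 3 * INR (l + 4) * pw n)%Re.
    move=> z Hz. apply: Rle_trans B0. exact: IZR_le.
  case: (edge_class Huv) => [[Hv Hp]|[Hu Hp]].
  - rewrite /y off_eq // Hp. case: ifP => _.
    + apply: Bl. lia.
    + rewrite Huv /y. apply: (Bz _ n) => //.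
      have Hb : (Bmax v <= n)%N by apply/bigmax_leqP => x _; exact: sz_le_n.
      have := gi_mono Hb. have := gi_pos Hn.
      rewrite /Db. case: ifP => _; lia.
  - rewrite /y [off u]off_eq // Hp. case: ifP => _.
    + apply: Bl. lia.
    + rewrite (negbTE (Hsimple Huv)) /y.
      apply: (Bz _ n) => //.
      have Ha : (Amax u <= n)%N by apply/bigmax_leqP => x _; exact: sz_le_n.
      have := gi_mono Ha. have := gi_pos Hn.
      rewrite /Ub. case: ifP => _; lia.
Qed.


Definition X (v : 'I_n) : R := INR (lo v).
Definition tent (z : R) : R := (((1 - Rabs z) + Rabs (1 - Rabs z)) / 2)%Re.
Definition XE (p c : 'I_n) (t : R) : R :=
  (X c - 1/2 + 1/2 * tent (t - IZR (y c)) + (X p - X c + 1/2) * tent (t - IZR (y p)))%Re.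
Definition posc (c : 'I_n) (j : Z) : R := XE (par c) c (IZR j).

Lemma tent_int z : tent (IZR z) = if Z.eqb z 0 then 1%Re else 0%Re.
Proof.
  rewrite /tent. case: (Z.eqb_spec z 0) => [->|Hz].
  - rewrite Rabs_R0. have -> : (1 - 0 = 1)%Re by lra. rewrite Rabs_R1. lra.
  - have H : (1 <= Rabs (IZR z))%Re.
      case: (Z_lt_le_dec z 0) => Hz'.
      + rewrite Rabs_left; last by apply: IZR_lt. have : (IZR z <= -1)%Re by apply: IZR_le; lia. lra.
      + rewrite Rabs_right; last by apply: Rle_ge; apply: IZR_le. apply: IZR_le.
        lia.
    rewrite (Rabs_left1 (1 - Rabs (IZR z))); lra.
Qed.

Lemma tent_lin (k m : Z) (t : R) : (IZR k <= t <= IZR k + 1)%Re ->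
  tent (t - IZR m) = ((IZR k + 1 - t) * tent (IZR k - IZR m) + (t - IZR k) * tent (IZR k + 1 - IZR m))%Re.
Proof.
  move=> [H1 H2]. rewrite -!minus_IZR -plus_IZR -minus_IZR !tent_int /tent plus_IZR.
  have Ht : forall r : R, (0 <= r)%Re -> Rabs r = r by move=> r Hr; rewrite Rabs_right //; lra.
  have Hn : forall r : R, (r <= 0)%Re -> Rabs r = (- r)%Re by move=> r Hr; rewrite Rabs_left1 //.
  case: (Z_lt_le_dec (k - m) (-1)) => Ha.
  - rewrite (proj2 (Z.eqb_neq (k - m) 0) ltac:(lia)).
    rewrite (proj2 (Z.eqb_neq (k + 1 - m) 0) ltac:(lia)).
    have : (IZR (k - m) <= -2)%Re by apply: IZR_le; lia. rewrite minus_IZR => Hk.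
    rewrite (Hn (t - IZR m)%Re); last lra. rewrite (Hn (1 - - (t - IZR m))%Re); lra.
  - case: (Z.eq_dec (k - m) (-1)) => Hb.
    + rewrite (proj2 (Z.eqb_neq (k - m) 0) ltac:(lia)).
      rewrite (proj2 (Z.eqb_eq (k + 1 - m) 0) ltac:(lia)).
      have Hm : IZR m = (IZR k + 1)%Re by rewrite -plus_IZR; f_equal; lia.
      rewrite Hm (Hn (t - (IZR k + 1))%Re); last lra. rewrite Ht; lra.
    + case: (Z.eq_dec (k - m) 0) => Hc.
      * rewrite (proj2 (Z.eqb_eq (k - m) 0) ltac:(lia)).
        rewrite (proj2 (Z.eqb_neq (k + 1 - m) 0) ltac:(lia)).
        have Hm : IZR m = IZR k by f_equal; lia.
        rewrite Hm (Ht (t - IZR k)%Re); last lra. rewrite Ht; lra.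
      * rewrite (proj2 (Z.eqb_neq (k - m) 0) ltac:(lia)).
        rewrite (proj2 (Z.eqb_neq (k + 1 - m) 0) ltac:(lia)).
        have : (1 <= IZR (k - m))%Re by apply: IZR_le; lia. rewrite minus_IZR => Hk.
        rewrite (Ht (t - IZR m)%Re); last lra. rewrite (Hn (1 - (t - IZR m))%Re); lra.
Qed.

Lemma XE_lin p c (k : Z) (t : R) : (IZR k <= t <= IZR k + 1)%Re ->
  XE p c t = ((IZR k + 1 - t) * XE p c (IZR k) + (t - IZR k) * XE p c (IZR (k + 1)))%Re.
Proof.
  move=> H. rewrite /XE (tent_lin (y c) H) (tent_lin (y p) H) plus_IZR.
  ring.
Qed.

Lemma y_par_ne c : c != rho -> y (par c) <> y c.
Proof.
  move=> Hc. case/orP: (par_edge Hc) => /y_edge; lia.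
Qed.

Lemma posc_val c j : c != rho ->
  posc c j = if Z.eqb j (y (par c)) then X (par c) else if Z.eqb j (y c) then X c else (X c - 1/2)%Re.
Proof.
  move=> Hc. have Hne := y_par_ne Hc. rewrite /posc /XE -!minus_IZR !tent_int.
  case: (Z.eqb_spec j (y (par c))) => [->|H1].
  - rewrite (proj2 (Z.eqb_neq (y (par c) - y c) 0) ltac:(lia)).
    rewrite Z.sub_diag /=. lra.
  - rewrite (proj2 (Z.eqb_neq (j - y (par c)) 0) ltac:(lia)).
    case: (Z.eqb_spec j (y c)) => [->|H2].
    + rewrite Z.sub_diag /=. lra.
    + rewrite (proj2 (Z.eqb_neq (j - y c) 0) ltac:(lia)). lra.
Qed.

Lemma X_lt a b : (lo a < lo b)%N -> (X a < X b)%Re.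
Proof. move=> H. apply: lt_INR. by apply/ltP. Qed.

Lemma X_le1 a b : (lo a < lo b)%N -> (X a + 1 <= X b)%Re.
Proof. move=> H. rewrite /X -S_INR. apply: le_INR. by apply/leP. Qed.

Lemma X_inj a b : X a = X b -> a = b.
Proof. move=> H. apply: lo_inj. exact: INR_eq H. Qed.

Lemma X_half a b : X a <> (X b - 1/2)%Re.
Proof.
  rewrite /X => H. have : INR (2 * lo a + 1) = INR (2 * lo b).
    rewrite plus_INR !mult_INR /=. lra.
  move/INR_eq. lia.
Qed.

Lemma posc_le c j : c != rho -> (posc c j <= X c)%Re.
Proof.
  move=> Hc. rewrite posc_val //. have Hch : child (par c) c by rewrite /child Hc eqxx.
  have := X_lt (lo_child_lt Hch).
  case: ifP => _; first lra. case: ifP => _; lra.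
Qed.

Definition in_range (c : 'I_n) (j : Z) : Prop := Z.min (y (par c)) (y c) <= j <= Z.max (y (par c)) (y c).

Lemma keyL c q d0 : c != rho -> child q d0 -> (lo c < lo d0)%N -> in_range c (y q) ->
  (posc c (y q) <= X q)%Re.
Proof.
  move=> Hc Hd Hlt Hr. have Pl := posc_le (y q) Hc.
  case: (ltngtP (lo c) (lo q)) => H.
  - have := X_lt H. lra.
  - have [d' [Hd' Ad' Hk]] := F3 Hd H Hlt.
    have Nh : d' != heavy q.
      apply/eqP => E'. have Ndd : d0 != heavy q by apply/eqP => E2; move: Hk; rewrite E' E2 ltnn.
      have := keyc_heavy Hd Ndd. rewrite -E'. lia.
    case: (eqVneq c d') => [Ecd|Ncd].
    + have Hp : par c = q by move: Hd' => /andP [_ /eqP]; rewrite Ecd.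
      rewrite posc_val // Hp Z.eqb_refl. lra.
    + have Ap : anc d' (par c) := anc_up Ad' Ncd.
      move: Hr. rewrite /in_range.
      case: (side Hd' Nh) => Hs; have := Hs _ Ad'; have := Hs _ Ap; lia.
  - have Ec := lo_inj H. subst q. rewrite posc_val //.
    rewrite (proj2 (Z.eqb_neq (y c) (y (par c))) ltac:(have := y_par_ne Hc; lia)) Z.eqb_refl. lra.
Qed.

Lemma sign c d0 j : c != rho -> d0 != rho -> (lo c < lo d0)%N -> in_range c j -> in_range d0 j ->
  (posc c j <= posc d0 j)%Re /\ (posc c j = posc d0 j -> j = y (par d0)).
Proof.
  move=> Hc Hd Hlt Rc Rd. have Pc := posc_le j Hc. have Xl := X_le1 Hlt.
  have Hch : child (par d0) d0 by rewrite /child Hd eqxx.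
  case: (Z.eqb_spec j (y (par d0))) => [Ej|Nj].
  - subst j. have := keyL Hc Hch Hlt Rc. rewrite [posc d0 _]posc_val // Z.eqb_refl. move=> H; split => //; lra.
  - rewrite [posc d0 j]posc_val // (proj2 (Z.eqb_neq _ _) Nj).
    case: ifP => _; split; try lra; move=> E'; exfalso; lra.
Qed.


Lemma posc_cases c j : c != rho ->
  (j = y (par c) /\ posc c j = X (par c)) \/ (j = y c /\ posc c j = X c) \/ posc c j = (X c - 1/2)%Re.
Proof.
  move=> Hc. rewrite posc_val //.
  case: (Z.eqb_spec j (y (par c))) => H1; first by left.
  case: (Z.eqb_spec j (y c)) => H2; [right; left | right; right] => //.
Qed.

Lemma posc_vertex c j : c != rho ->
  (exists a, (a = par c \/ a = c) /\ j = y a /\ posc c j = X a) \/ posc c j = (X c - 1/2)%Re.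
Proof.
  move=> Hc. case: (posc_cases j Hc) => [[J P]|[[J P]|P]].
  - left. exists (par c). by split; [left|].
  - left. exists c. by split; [right|].
  - by right.
Qed.

Definition cE (u v : 'I_n) : 'I_n := if (v != rho) && (par v == u) then v else u.

Lemma cE_spec u v : E u v -> cE u v != rho /\
  ((cE u v = v /\ par v = u) \/ (cE u v = u /\ par u = v)).
Proof.
  move=> Huv. rewrite /cE. case: ifP => [/andP [H1 /eqP H2]|H].
  - split => //. by left.
  - case: (edge_class Huv) => [[H1 H2]|[H1 H2]].
    + by rewrite H1 H2 eqxx in H.
    + split => //. by right.
Qed.

Lemma cE_range u v j : E u v -> in_range (cE u v) j <-> y u <= j <= y v.
Proof.
  move=> Huv. have Hy := y_edge Huv. rewrite /in_range.
  case: (cE_spec Huv) => _ [[-> ->]|[-> ->]]; lia.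
Qed.

Lemma cE_mem u v a : E u v -> (a = par (cE u v) \/ a = cE u v) -> a = u \/ a = v.
Proof.
  move=> Huv Ha. case: (cE_spec Huv) => _ [[E1 E2]|[E1 E2]]; rewrite E1 ?E2 in Ha;
  case: Ha => ->; auto.
Qed.

Definition gy (u v : 'I_n) (t : R) : R := (IZR (y u) + t * (IZR (y v) - IZR (y u)))%Re.
Definition gx (u v : 'I_n) (t : R) : R := XE (par (cE u v)) (cE u v) (gy u v t).

Lemma oncurve u v P : E u v -> on_curve (gx u v) (gy u v) P ->
  (IZR (y u) <= snd P <= IZR (y v))%Re /\ fst P = XE (par (cE u v)) (cE u v) (snd P).
Proof.
  move=> Huv [t [Ht [Hx Hy]]]. have := IZR_lt _ _ (y_edge Huv). move=> Hlt.
  rewrite -Hx -Hy /gx. split => //. rewrite /gy. nra.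
Qed.

Lemma floor_ex (t : R) : exists k : Z, (IZR k <= t < IZR k + 1)%Re.
Proof.
  exists (up t - 1). have [H1 H2] := archimed t. rewrite minus_IZR. lra.
Qed.

Lemma no_cross c d0 (k : Z) (t : R) : c != rho -> d0 != rho -> c != d0 ->
  (IZR k < t < IZR k + 1)%Re ->
  in_range c k -> in_range c (k + 1) -> in_range d0 k -> in_range d0 (k + 1) ->
  XE (par c) c t <> XE (par d0) d0 t.
Proof.
  move=> Hc Hd Hne Ht R1 R2 R3 R4.
  rewrite (XE_lin (par c) c (k := k)); last lra.
  rewrite (XE_lin (par d0) d0 (k := k)); last lra.
  rewrite -/(posc c k) -/(posc c (k + 1)) -/(posc d0 k) -/(posc d0 (k + 1)).
  have Hlo : lo c != lo d0 by apply/eqP => /lo_inj E'; rewrite E' eqxx in Hne.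
  case: (ltngtP (lo c) (lo d0)) => H; last by rewrite H eqxx in Hlo.
  - have [A1 B1] := sign Hc Hd H R1 R3. have [A2 B2] := sign Hc Hd H R2 R4.
    move=> Eq. case: (Req_dec (posc c k) (posc d0 k)) => E1.
    + case: (Req_dec (posc c (k + 1)) (posc d0 (k + 1))) => E2.
      * have := B1 E1; have := B2 E2. lia.
      * nra.
    + nra.
  - have [A1 B1] := sign Hd Hc H R3 R1. have [A2 B2] := sign Hd Hc H R4 R2.
    move=> Eq. case: (Req_dec (posc c k) (posc d0 k)) => E1.
    + case: (Req_dec (posc c (k + 1)) (posc d0 (k + 1))) => E2.
      * have := B1 (esym E1); have := B2 (esym E2). lia.
      * nra.
    + nra.
Qed.

Lemma cE_uniq u v u' v' : E u v -> E u' v' -> cE u v = cE u' v' -> (u, v) = (u', v').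
Proof.
  move=> H1 H2 Ec. case: (cE_spec H1) => _ C1. case: (cE_spec H2) => _ C2.
  move: C1 C2; rewrite Ec. set c := cE u' v'.
  case=> [[A1 B1]|[A1 B1]] [[A2 B2]|[A2 B2]].
  - have Ev : v = v' by rewrite -A1 A2. have Eu : u = u' by rewrite -B1 -B2 Ev.
    by rewrite Eu Ev.
  - exfalso. have Ev : v = u' by rewrite -A1 A2. have Eu : u = v' by rewrite -B1 -B2 Ev.
    move: H2. rewrite -Ev -Eu => H2. by have := Hsimple H1; rewrite H2.
  - exfalso. have Eu : u = v' by rewrite -A1 A2. have Ev : v = u' by rewrite -B1 -B2 Eu.
    move: H2. rewrite -Ev -Eu => H2. by have := Hsimple H1; rewrite H2.
  - have Eu : u = u' by rewrite -A1 A2. have Ev : v = v' by rewrite -B1 -B2 Eu.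
    by rewrite Eu Ev.
Qed.

Lemma drawing_ok : upward_planar_layered_drawing E X y gx gy.
Proof.
  split; [|split; [|split]].
  - move=> u v [H1 _]. exact: X_inj.
  - move=> u v Huv. have Hy := IZR_lt _ _ (y_edge Huv).
    have [Hc C] := cE_spec Huv.
    split; [|split; [|split; [|split; [|split; [|split]]]]].
    + rewrite /gx /XE /tent /gy. reg.
    + rewrite /gy. reg.
    + rewrite /gx /gy Rmult_0_l Rplus_0_r -/(posc _ _).
      case: C => [[E1 E2]|[E1 E2]]; rewrite E1 in Hc *; rewrite posc_val //.
      * by rewrite E2 Z.eqb_refl.
      * rewrite E2 (proj2 (Z.eqb_neq (y u) (y v)) ltac:(have := y_edge Huv; lia)) Z.eqb_refl. done.
    + rewrite /gy. lra.
    + rewrite /gx /gy Rmult_1_l. have -> : (IZR (y u) + (IZR (y v) - IZR (y u)) = IZR (y v))%Re by ring.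
      rewrite -/(posc _ _).
      case: C => [[E1 E2]|[E1 E2]]; rewrite E1 in Hc *; rewrite posc_val //.
      * rewrite E2 (proj2 (Z.eqb_neq (y v) (y u)) ltac:(have := y_edge Huv; lia)) Z.eqb_refl. done.
      * by rewrite E2 Z.eqb_refl.
    + rewrite /gy. lra.
    + move=> s t Hs Hst Ht. rewrite /gy. nra.
  - move=> u v w Huv Hwu Hwv Hon. have [[R1 R2] Hx] := oncurve Huv Hon.
    simpl in R1, R2, Hx. have [Hc C] := cE_spec Huv.
    rewrite -/(posc _ _) in Hx.
    case: (posc_cases (y w) Hc) => [[_ Ep]|[[_ Ep]|Ep]]; rewrite Ep in Hx.
    + have Ew := X_inj Hx. case: C => [[E1 E2]|[E1 E2]]; rewrite E1 E2 in Ew; by [apply: Hwu|apply: Hwv].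
    + have Ew := X_inj Hx. case: C => [[E1 E2]|[E1 E2]]; rewrite E1 in Ew; by [apply: Hwu|apply: Hwv].
    + exact: X_half Hx.
  - move=> u v u' v' H1 H2 Hne [px py] On1 On2.
    have [[R1 R2] X1] := oncurve H1 On1. have [[R3 R4] X2] := oncurve H2 On2.
    simpl in R1, R2, R3, R4, X1, X2.
    have [Hc C1] := cE_spec H1. have [Hd C2] := cE_spec H2.
    have Ncd : cE u v != cE u' v'. apply/eqP => E'. exact: Hne (cE_uniq H1 H2 E').
    have [k [K1 K2]] := floor_ex py.
    case: (Req_dec (IZR k) py) => Hk.
    + subst py. rewrite -/(posc _ _) in X1. rewrite -/(posc _ _) in X2.
      case: (posc_vertex k Hc) => [[a [Ha [Ja Pa]]]|Pa];
      case: (posc_vertex k Hd) => [[b [Hb [Jb Pb]]]|Pb].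
      * have Eab : a = b by apply: X_inj; rewrite -Pa -Pb -X1 -X2.
        exists a. split; first exact: cE_mem H1 Ha.
        split; first by rewrite Eab; exact: cE_mem H2 Hb.
        by rewrite X1 Pa Ja.
      * exfalso. apply: (@X_half a (cE u' v')). by rewrite -Pa -Pb -X1 -X2.
      * exfalso. apply: (@X_half b (cE u v)). by rewrite -Pa -Pb -X1 -X2.
      * exfalso. have Ew : X (cE u v) = X (cE u' v') by rewrite X1 in X2; lra.
        by rewrite (X_inj Ew) eqxx in Ncd.
    + exfalso. have Hk' : (IZR k < py)%Re by lra.
      have Rk : forall a b : 'I_n, E a b -> (IZR (y a) <= py <= IZR (y b))%Re ->
          in_range (cE a b) k /\ in_range (cE a b) (k + 1).
        move=> a b Hab [Q1 Q2]. rewrite !(cE_range _ Hab).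
        have : y a < k + 1 by apply: lt_IZR; rewrite plus_IZR; lra.
        have : k < y b by apply: lt_IZR; lra. lia.
      have [A1 A2] := Rk _ _ H1 (conj R1 R2). have [A3 A4] := Rk _ _ H2 (conj R3 R4).
      apply: (no_cross Hc Hd Ncd (conj Hk' K2) A1 A2 A3 A4). by rewrite -X1 -X2.
Qed.

End Tree.

From mathcomp Require Import all_boot.
From Stdlib Require Import Reals ZArith.

Theorem mainTheorem10 :
  exists c : R, (0 < c)%R /\
  forall (n : nat) (E : rel 'I_n) (l : nat),
    directed_tree E -> longest_path_length E l -> 1 <= l ->
    exists (X : 'I_n -> R) (Y : 'I_n -> Z) (gx gy : 'I_n -> 'I_n -> R -> R),
      upward_planar_layered_drawing E X Y gx gy /\
      drawing_span_le E Y
        (c * INR l * Rpower (INR n) (ln golden_ratio / ln 2))%R.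
Proof.
  exists 15%R. split; first lra.
  move=> n E l HT HL Hl.
  exists (@X n E HT), (@y n E HT l HL), (@gx n E HT l HL), (@gy n E HT l HL).
  split; first exact: drawing_ok.
  move=> u v Huv.
  have H := @y_span n E HT l HL u v Huv.
  rewrite (@pw_S n) in H; last by apply/ltP; exact: Hn HT.
  have Hl' : (1 <= INR l)%R by apply: (le_INR 1); apply/leP.
  have Hp : (1 <= Rpower (INR n) alpha)%R.
    rewrite -(@pw_S n); last by apply/ltP; exact: Hn HT.
    apply: pw_ge1. apply/ltP; exact: Hn HT.
  rewrite plus_INR in H. rewrite /alpha in H Hp. simpl in H. nra.
Qed.
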